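(* Let $\mathcal T=(T,\lambda)$ be a temporal oriented tree and let $u,v,w,x$ be pairwise distinct vertices of $T$ such that there is at least one temporal path from $u$ to $v$, at least one temporal path from $w$ to $x$, and every temporal path from $u$ to $v$ has a vertex in common with every temporal path from $w$ to $x$. Then there is a temporal path from $u$ to $x$ or a temporal path from $w$ to $v$.
   Context: A temporal digraph is a pair $(D,\lambda)$ with $D=(V,A)$ a finite digraph and $\lambda:A\to 2^{\{1,\dots,t_{\max}\}}$ giving the time-steps at which each arc is active. A temporal oriented tree $\mathcal T=(T,\lambda)$ is one whose underlying digraph $T$ is an orientation of a tree. A temporal path from $v_1$ to $v_k$ is a sequence $(v_1,v_2,t_1),\dots,(v_{k-1},v_k,t_{k-1})$ with pairwise distinct $v_i$, $\overrightarrow{v_iv_{i+1}}\in A$, $t_i\in\lambda(\overrightarrow{v_iv_{i+1}})$ and $t_1<\dots<t_{k-1}$ (strictly increasing). *)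

(* Defs.v *)
From mathcomp Require Import all_boot.
Set Implicit Arguments. Unset Strict Implicit. Unset Printing Implicit Defensive.

(* A time labelling lam assigns to each arc a set of
   time-steps (as a predicate on nat); only its values on arcs matter. *)

Definition temporal_labelling (V : finType) (tmax : nat) (lam : V -> V -> pred nat) :=
  forall x y t, lam x y t -> (1 <= t <= tmax).

Definition und_adj (V : finType) (A : rel V) : rel V := fun x y => A x y || A y x.

Definition oriented_tree (V : finType) (A : rel V) :=
  [/\ (forall x, ~~ A x x),
      (forall x y, A x y -> ~~ A y x),
      (forall x y, connect (und_adj A) x y) &
      (forall s : seq V, uniq s -> 2 < size s -> ~~ cycle (und_adj A) s)].

(* A temporal path from u to v is encoded as the sequence
   p = [:: (v2,t1); (v3,t2); ...; (vk,t_{k-1})] with v1 = u, standing for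
   (v1,v2,t1), ..., (v_{k-1},v_k,t_{k-1}). *)
Definition tpath_verts (V : finType) (u : V) (p : seq (V * nat)) : seq V :=
  u :: map fst p.

Definition temporal_path (V : finType) (A : rel V) (lam : V -> V -> pred nat)
    (u v : V) (p : seq (V * nat)) : bool :=
  [&& uniq (tpath_verts u p),
      last u (map fst p) == v,
      path (fun a b : V * nat => A a.1 b.1 && lam a.1 b.1 b.2) (u, 0) p &
      sorted ltn (map snd p)].

(* Main.v *)
Require Import Defs.
From mathcomp Require Import all_boot.
Set Implicit Arguments.
Unset Strict Implicit.

Section Aux.
Variables (V : finType) (A : rel V) (lam : V -> V -> pred nat).
Let R := fun a b : V * nat => A a.1 b.1 && lam a.1 b.1 b.2.

Definition walk (u v : V) (p : seq (V * nat)) :=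
  [&& last u (map fst p) == v, path R (u, 0) p & pairwise ltn (map snd p)].

Lemma pathR a p : path R a p = path R (a.1, 0) p.
Proof. by case: p. Qed.

Lemma walk_cons u v b p : walk u v (b :: p) =
  [&& R (u, 0) b, walk b.1 v p & all (ltn b.2) (map snd p)].
Proof.
rewrite /walk.
have -> : path R (u, 0) (b :: p) = R (u, 0) b && path R (b.1, 0) p.
  by rewrite -(pathR b).
rewrite map_cons last_cons map_cons pairwise_cons.
by case: (R _ _); case: (last _ _ == v); case: (path R _ p); case: (all _ _); case: (pairwise _ _).
Qed.

Lemma tp_walk u v p : temporal_path A lam u v p = uniq (tpath_verts u p) && walk u v p.
Proof. by rewrite /temporal_path /walk sorted_pairwise //; exact: ltn_trans. Qed.

Lemma walk_split u v p c : walk u v p -> c \in u :: map fst p ->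
  exists p1 p2, [/\ p = p1 ++ p2, walk u c p1 & walk c v p2].
Proof.
elim: p u => [|b p IH] u.
  rewrite inE => Hw /eqP->; exists [::], [::]; split => //.
  by rewrite /walk /= eqxx.
case: (eqVneq c u) => [-> Hw _|neq].
  by exists [::], (b :: p); split => //; rewrite /walk /= eqxx.
rewrite inE (negbTE neq) /= walk_cons => /and3P[Hb Hw' Hs] Hc.
have [p1 [p2 [Ep W1 W2]]] := IH _ Hw' Hc.
exists (b :: p1), p2; split => //; first by rewrite Ep.
move: Hs; rewrite walk_cons Hb W1 Ep map_cat all_cat /=.
by case/andP=> ->.
Qed.

Lemma walk_cat u c x p1 q2 : walk u c p1 -> walk c x q2 ->
  allrel ltn (map snd p1) (map snd q2) -> walk u x (p1 ++ q2).
Proof.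
move=> /and3P[/eqP H1 P1 S1] /and3P[/eqP H2 P2 S2] Hr.
rewrite /walk map_cat last_cat H1 H2 eqxx cat_path P1 /=.
rewrite pathR -(last_map fst) /= H1 P2 /= map_cat pairwise_cat Hr S1 S2.
by [].
Qed.

Lemma walk_shortcut u v p : walk u v p ->
  exists p', temporal_path A lam u v p' /\ {subset p' <= p}.
Proof.
elim: p u => [|a p IH] u.
  by move=> Hw; exists [::]; split => //; rewrite tp_walk Hw.
rewrite walk_cons => /and3P[Ha Hw' Hs].
have [p' [Tp Sub]] := IH _ Hw'.
have suff_lem : forall y q, temporal_path A lam y v q -> forall z,
    z \in tpath_verts y q -> exists q', temporal_path A lam z v q' /\ {subset q' <= q}.
  move=> y q; elim: q y => [|b q IHq] y Ty z.
    by rewrite inE => /eqP->; exists [::].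
  case: (eqVneq z y) => [->|nz]; first by exists (b :: q); split.
  rewrite /tpath_verts inE (negbTE nz) /= => Hz.
  have Tb : temporal_path A lam b.1 v q.
    move: Ty; rewrite !tp_walk walk_cons /tpath_verts => /andP[U /and3P[_ -> _]].
    by move: U => /= /andP[_ ->].
  have [q' [T' S']] := IHq _ Tb z Hz.
  by exists q'; split => // e /S' He; rewrite inE He orbT.
case Hu: (u \in tpath_verts a.1 p').
  have [q' [T' S']] := suff_lem _ _ Tp u Hu.
  by exists q'; split => // e /S' /Sub He; rewrite inE He orbT.
exists (a :: p'); split; last first.
  by move=> e; rewrite !inE => /orP[->//|/Sub ->]; rewrite orbT.
move: Tp; rewrite !tp_walk walk_cons => /andP[U W].
rewrite /tpath_verts map_cons cons_uniq Hu U Ha W /=.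
apply/allP => t /mapP[e /Sub He ->].
move/allP: Hs; apply; exact: map_f.
Qed.

End Aux.

Theorem mainTheorem6 (V : finType) (A : rel V) (tmax : nat)
    (lam : V -> V -> pred nat) (u v w x : V) :
  oriented_tree A ->
  temporal_labelling tmax lam ->
  uniq [:: u; v; w; x] ->
  (exists p, temporal_path A lam u v p) ->
  (exists q, temporal_path A lam w x q) ->
  (forall p q, temporal_path A lam u v p -> temporal_path A lam w x q ->
     exists y, (y \in tpath_verts u p) && (y \in tpath_verts w q)) ->
  (exists p, temporal_path A lam u x p) \/ (exists q, temporal_path A lam w v q).
Proof.
move=> _ _ _ [p Tp] [q Tq] /(_ p q Tp Tq) [c /andP[Hcp Hcq]].
move: Tp Tq; rewrite !tp_walk => /andP[_ Wp] /andP[_ Wq].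
have [p1 [p2 [Ep W1 W2]]] := walk_split Wp Hcp.
have [q1 [q2 [Eq Z1 Z2]]] := walk_split Wq Hcq.
case H: (allrel ltn (map snd p1) (map snd q2)).
  have [p' [T' _]] := walk_shortcut (walk_cat W1 Z2 H).
  by left; exists p'.
right.
have Hp : allrel ltn (map snd p1) (map snd p2).
  by move: Wp => /and3P[_ _]; rewrite Ep map_cat pairwise_cat => /and3P[].
have Hq : allrel ltn (map snd q1) (map snd q2).
  by move: Wq => /and3P[_ _]; rewrite Eq map_cat pairwise_cat => /and3P[].
have H' : allrel ltn (map snd q1) (map snd p2).
  apply/allrelP => s1 s2 Hs1 Hs2; change (s1 < s2); rewrite ltnNge; apply/negP => Hle.
  suff : allrel ltn (map snd p1) (map snd q2) by rewrite H.
  apply/allrelP => t1 t2 Ht1 Ht2.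
  have h1 := allrelP Hp t1 s2 Ht1 Hs2.
  have h2 := allrelP Hq s1 t2 Hs1 Ht2.
  exact: ltn_trans (leq_ltn_trans Hle h2).
have [q' [T' _]] := walk_shortcut (walk_cat Z1 W2 H').
by exists q'.
Qed.
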